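(* Let $q=2^n$, let $B$ be a $k$-subset of $\mathrm{GF}(q)$ with $k\ge 3$, and let $\mathcal B=\mathrm{GA}_1(q)(B)$. For pairwise distinct $u_1,u_2,u_3\in\mathrm{GF}(q)$ define $I_B(u_1,u_2,u_3)=|\{(x,y)\in\mathrm{GF}(q)^2: u_ix+y\in B\ (i=1,2,3)\}|$. Then $(\mathrm{GF}(q),\mathcal B)$ is a $3$-design if and only if $I_B(u_1,u_2,u_3)$ is independent of the specific choice of the pairwise distinct elements $u_1,u_2,u_3$.
   Context: $\mathrm{GA}_1(q)$ is the group of permutations $\pi_{a,b}(x)=ax+b$ of $\mathrm{GF}(q)$ with $(a,b)\in\mathrm{GF}(q)^*\times\mathrm{GF}(q)$; for $B\subseteq\mathrm{GF}(q)$, $\mathrm{GA}_1(q)(B)=\{\pi(B):\pi\in\mathrm{GA}_1(q)\}$ is the orbit of $B$ (a set of $k$-subsets). A pair $(\mathcal P,\mathcal B)$ with $\mathcal B$ a set of $k$-subsets of $\mathcal P$ is a $3$-design if every $3$-subset of $\mathcal P$ is contained in exactly $\lambda$ members of $\mathcal B$, for some constant $\lambda$. *)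

(* Defs.v *)
From HB Require Import structures.
From mathcomp Require Import all_boot all_order all_algebra all_field.
Set Implicit Arguments. Unset Strict Implicit. Unset Printing Implicit Defensive.
Import GRing.Theory.
Local Open Scope ring_scope.

Definition affine_map (F : finFieldType) (a b : F) (x : F) : F := a * x + b.

Definition GA1_orbit (F : finFieldType) (B : {set F}) : {set {set F}} :=
  [set (affine_map ab.1 ab.2) @: B | ab in [set ab : F * F | ab.1 != 0]].

Definition is_3design (T : finType) (k : nat) (Bs : {set {set T}}) : Prop :=
  (forall Bl, Bl \in Bs -> #|Bl| = k) /\
  exists lam : nat, forall S : {set T}, #|S| = 3 ->
    #|[set Bl in Bs | S \subset Bl]| = lam.

Definition I_B (F : finFieldType) (B : {set F}) (u1 u2 u3 : F) : nat :=
  #|[set xy : F * F | [&& u1 * xy.1 + xy.2 \in B, u2 * xy.1 + xy.2 \in B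
                        & u3 * xy.1 + xy.2 \in B]]|.

(* Main.v *)
Require Import Defs.
From HB Require Import structures.
From mathcomp Require Import all_boot all_order all_algebra all_field.
From mathcomp Require Import ring.
Import GRing.Theory.
Local Open Scope ring_scope.

Section Aux.
Variable F : finFieldType.
Variable B : {set F}.

Definition Gs : {set F * F} := [set ab : F * F | ab.1 != 0].
Definition fm (ab : F * F) := affine_map ab.1 ab.2.
Definition img (ab : F * F) : {set F} := fm ab @: B.
Definition comp (s t : F * F) : F * F := (s.1 * t.1, s.1 * t.2 + s.2).
Definition inv (s : F * F) : F * F := (s.1^-1, - (s.1^-1 * s.2)).

Lemma fm_comp s t x : fm (comp s t) x = fm s (fm t x).
Proof. rewrite /fm /affine_map /comp /=; ring. Qed.

Lemma img_comp s t : img (comp s t) = fm s @: img t.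
Proof.
rewrite /img -imset_comp; apply: eq_imset => x; exact: fm_comp.
Qed.

Lemma fm_inv s x : s.1 != 0 -> fm (inv s) (fm s x) = x.
Proof.
move=> h; rewrite /fm /affine_map /inv /=.
by field.
Qed.

Lemma fm_invr s x : s.1 != 0 -> fm s (fm (inv s) x) = x.
Proof.
move=> h; rewrite /fm /affine_map /inv /=.
by field.
Qed.

Lemma fm_inj s : s.1 != 0 -> injective (fm s).
Proof. move=> h; exact: (can_inj (fun x => @fm_inv s x h)). Qed.

Lemma inv_G s : s.1 != 0 -> (inv s).1 != 0.
Proof. by move=> h /=; rewrite invr_eq0. Qed.

Lemma invK s : s.1 != 0 -> inv (inv s) = s.
Proof.
case: s => a b /= h; rewrite /inv /= invrK; congr pair.
by field.
Qed.

Lemma in_img s u : s.1 != 0 -> (u \in img s) = (fm (inv s) u \in B).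
Proof.
move=> h; rewrite /img -{1}(@fm_invr s u h) mem_imset //; exact: fm_inj.
Qed.

Lemma img_id : img (1, 0) = B.
Proof.
rewrite /img -[RHS]imset_id; apply: eq_imset => x.
by rewrite /fm /affine_map /= mul1r addr0.
Qed.

Definition m := #|[set ab in Gs | img ab == B]|.

Lemma comp_inj t : t.1 != 0 -> injective (comp t).
Proof.
case: t => a b /= h [c d] [c' d'] [] /(mulfI h) -> /addIr /(mulfI h) -> //.
Qed.

Lemma comp_invl t : t.1 != 0 -> comp (inv t) t = (1, 0).
Proof.
case: t => a b /= h; rewrite /comp /inv /=; congr pair.
  by rewrite mulVf.
by rewrite addrN.
Qed.

Lemma fiber_card t : t \in Gs -> #|[set ab in Gs | img ab == img t]| = m.
Proof.
rewrite inE => ht; apply/eqP; rewrite eqn_leq; apply/andP; split.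
- rewrite -(card_imset _ (comp_inj _ (inv_G _ ht))).
  apply: subset_leq_card; apply/subsetP => y /imsetP [s]; rewrite !inE.
  case/andP => hs /eqP hi ->.
  rewrite img_comp hi -img_comp comp_invl // img_id eqxx andbT.
  by rewrite /comp /= mulf_eq0 negb_or invr_eq0 ht hs.
- rewrite /m -(card_imset _ (comp_inj _ ht)).
  apply: subset_leq_card; apply/subsetP => y /imsetP [s]; rewrite !inE.
  case/andP => hs /eqP hi ->.
  rewrite img_comp hi /img eqxx andbT.
  by rewrite /comp /= mulf_eq0 negb_or ht hs.
Qed.

Lemma orbitE : GA1_orbit B = img @: Gs.
Proof. by []. Qed.

Lemma card_cond (T : finType) (A : {set T}) (P : pred T) :
  #|[set x in A | P x]| = (\sum_(x in A) (if P x then 1 else 0))%N.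
Proof.
rewrite -sum1_card -big_mkcondr /=; apply: eq_bigl => x; by rewrite inE.
Qed.

Lemma count_img (S : {set F}) :
  #|[set s in Gs | S \subset img s]| =
  (#|[set Bl in GA1_orbit B | S \subset Bl]| * m)%N.
Proof.
rewrite !card_cond (partition_big_imset img) orbitE big_distrl /=.
apply: eq_bigr => _ /imsetP [t ht ->].
rewrite (eq_bigr (fun _ => if S \subset img t then 1%N else 0%N)); last first.
  by move=> i /andP [_ /eqP ->].
rewrite sum_nat_const.
have -> : #|[pred i in Gs | img i == img t]| = m.
  rewrite -(fiber_card _ ht); apply: eq_card => i; by rewrite !inE.
by rewrite mulnC.
Qed.

Lemma sub3 (u1 u2 u3 : F) (X : {set F}) :
  ([set u1; u2; u3] \subset X) = [&& u1 \in X, u2 \in X & u3 \in X].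
Proof. by rewrite !subUset !sub1set -andbA. Qed.

Lemma IB_eq u1 u2 u3 :
  I_B B u1 u2 u3 = (#|B| + #|[set s in Gs | [set u1; u2; u3] \subset img s]|)%N.
Proof.
rewrite /I_B -(cardsID [set xy : F * F | xy.1 == 0]); congr addn.
- have inj0 : injective (fun y : F => (0 : F, y)) by move=> a b [].
  rewrite -(card_imset B inj0).
  apply: eq_card => -[x y]; rewrite !inE /=.
  apply/idP/imsetP.
    case/andP => /and3P [h1 _ _] /eqP hx; exists y; last by rewrite hx.
    by move: h1; rewrite hx mulr0 add0r.
  case=> z hz [-> ->]; by rewrite !mulr0 !add0r hz eqxx.
- rewrite -[LHS](card_in_imset (f := inv)); last first.
    move=> a b; rewrite !inE => /andP [ha _] /andP [hb _] e.
    by rewrite -(invK _ ha) e invK.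
  apply: eq_card => s; rewrite [in RHS]inE.
  apply/imsetP/idP.
    case=> p; rewrite !inE => /andP [hp /and3P [h1 h2 h3]] ->.
    rewrite inv_G // sub3 !in_img ?inv_G // invK //.
    by rewrite /fm /affine_map !(mulrC p.1) h1 h2 h3.
  case/andP; rewrite inE => hs; rewrite sub3 !in_img // => /and3P [h1 h2 h3].
  exists (inv s); last by rewrite invK.
  rewrite !inE inv_G //.
  by move: h1 h2 h3; rewrite /fm /affine_map !(mulrC (inv s).1) => -> -> ->.
Qed.
End Aux.

Theorem lemma7 (F : finFieldType) (n : nat) (hq : #|F| = (2 ^ n)%N)
  (B : {set F}) (k : nat) (hB : #|B| = k) (hk : (3 <= k)%N) :
  is_3design k (GA1_orbit B) <->
  exists c : nat, forall u1 u2 u3 : F,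
    u1 != u2 -> u1 != u3 -> u2 != u3 -> I_B B u1 u2 u3 = c.
Proof.
pose m0 := m F B.
have m_pos : (0 < m0)%N.
  apply/card_gt0P; exists (1, 0); rewrite !inE (img_id F B) oner_neq0 eqxx //.
have key u1 u2 u3 : I_B B u1 u2 u3 =
    (k + #|[set Bl in GA1_orbit B | [set u1; u2; u3] \subset Bl]| * m0)%N.
  by rewrite IB_eq count_img hB.
split.
- case=> _ [lam hlam]; exists (k + lam * m0)%N => u1 u2 u3 h12 h13 h23.
  rewrite key hlam //.
  rewrite (setUC ([set u1] :|: [set u2])) cardsU1 (setUC [set u1]) cardsU1 cards1 !inE.
  by rewrite negb_or (eq_sym u3 u2) (eq_sym u3 u1) (eq_sym u2 u1) h12 h13 h23.
- case=> c hc; split.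
    move=> Bl /imsetP [ab]; rewrite inE => hab ->.
    rewrite card_imset ?hB //; exact: (@fm_inj F ab hab).
  exists ((c - k) %/ m0)%N => S hS.
  have /card_gt0P [u1 hu1] : (0 < #|S|)%N by rewrite hS.
  have : #|S :\ u1| == 2.
    by move: hS; rewrite (cardsD1 u1) hu1 add1n => -[->].
  case/cards2P => u2 [u3 [h23 hS1]].
  have hu2 : u2 \in S :\ u1 by rewrite hS1 !inE eqxx.
  have hu3 : u3 \in S :\ u1 by rewrite hS1 !inE eqxx orbT.
  move: hu2 hu3; rewrite !inE => /andP [h21 _] /andP [h31 _].
  have -> : S = [set u1; u2; u3] by rewrite -setUA -hS1 setD1K.
  have h12 : u1 != u2 by rewrite eq_sym.
  have h13 : u1 != u3 by rewrite eq_sym.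
  have e := hc u1 u2 u3 h12 h13 h23.
  by rewrite -e key addKn mulnK.
Qed.
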